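(* Let $k$ be a field of prime characteristic $p$, let $d$ be a positive integer, and let $S^{(d)}_1$ be the $T$-space of $k_0\langle X\rangle$ generated by $S^{(d)}(x_1,\ldots,x_d)=\sum_{\sigma\in\Sigma_d}\prod_{i=1}^d x_{\sigma(i)}$. Then for any $u,v\in k_0\langle X\rangle$: (i) $(S^{(d)}_1uv)^S\subseteq S^{(d)}_1+(S^{(d)}_1u)^S+(S^{(d)}_1v)^S$; and (ii) $(uvS^{(d)}_1)^S\subseteq S^{(d)}_1+(uS^{(d)}_1)^S+(vS^{(d)}_1)^S$.
   Context: $X=\{x_1,x_2,\ldots\}$ is countably infinite; $k_0\langle X\rangle$ is the free associative (non-unital) $k$-algebra on $X$. A $T$-space is a $k$-subspace of $k_0\langle X\rangle$ invariant under every algebra endomorphism of $k_0\langle X\rangle$; $(A)^S$ is the $T$-space generated by a subset $A$. $\Sigma_d$ is the symmetric group on $d$ letters. For a subset $A$ and an element $u$, $Au=\{au:a\in A\}$, $uA=\{ua:a\in A\}$, and $Auv=\{auv: a\in A\}$. *)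

(* Defs.v *)
From mathcomp Require Import all_boot all_order all_algebra all_fingroup.
Set Implicit Arguments. Unset Strict Implicit. Unset Printing Implicit Defensive.
Import GRing.Theory.
Local Open Scope ring_scope.

(* Words in the letters of X = {x_1, x_2, ...}; the letter n : nat stands
   for x_(n+1).  An element of the free algebra is represented by its
   coefficient function  word -> k  (required to be finitely supported). *)
Definition word := seq nat.

Section FreeAlg.
Variable k : fieldType.

Definition fpoly := word -> k.

Definition fin_supp (f : fpoly) : Prop :=
  exists s : seq word, forall w, f w != 0 -> w \in s.

Definition in_k0X (f : fpoly) : Prop := fin_supp f /\ f [::] = 0.

Definition padd (f g : fpoly) : fpoly := fun w => f w + g w.
Definition pscale (c : k) (f : fpoly) : fpoly := fun w => c * f w.
Definition pzero : fpoly := fun _ => 0.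
Definition pmul (f g : fpoly) : fpoly :=
  fun w => \sum_(i < (size w).+1) f (take i w) * g (drop i w).

Definition is_endo (phi : fpoly -> fpoly) : Prop :=
  (forall f, in_k0X f -> in_k0X (phi f)) /\
  (forall f g, in_k0X f -> in_k0X g -> phi (padd f g) = padd (phi f) (phi g)) /\
  (forall c f, in_k0X f -> phi (pscale c f) = pscale c (phi f)) /\
  (forall f g, in_k0X f -> in_k0X g -> phi (pmul f g) = pmul (phi f) (phi g)).

Definition is_subspace (V : fpoly -> Prop) : Prop :=
  (forall f, V f -> in_k0X f) /\ V pzero /\
  (forall f g, V f -> V g -> V (padd f g)) /\
  (forall c f, V f -> V (pscale c f)).

Definition is_Tspace (V : fpoly -> Prop) : Prop :=
  is_subspace V /\ forall phi f, is_endo phi -> V f -> V (phi f).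

Definition Tgen (A : fpoly -> Prop) : fpoly -> Prop :=
  fun f => forall V, is_Tspace V -> (forall a, A a -> V a) -> V f.

Definition Sd (d : nat) : fpoly :=
  fun w => \sum_(s : 'S_d) (if w == [seq nat_of_ord (s i) | i <- enum 'I_d]
                            then 1 else 0).

Definition Sd1 (d : nat) : fpoly -> Prop := Tgen (fun f => f = Sd d).

Definition setMr (A : fpoly -> Prop) (u : fpoly) : fpoly -> Prop :=
  fun f => exists2 a, A a & f = pmul a u.
Definition setMl (u : fpoly) (A : fpoly -> Prop) : fpoly -> Prop :=
  fun f => exists2 a, A a & f = pmul u a.

Definition sum3 (A B C : fpoly -> Prop) : fpoly -> Prop :=
  fun f => exists a b c, [/\ A a, B b, C c & f = padd (padd a b) c].

End FreeAlg.

(* Main.v *)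
Require Import Defs.
From mathcomp Require Import all_boot all_order all_algebra all_fingroup.
From mathcomp Require Import boolp.
From Stdlib Require Import ClassicalEpsilon.
From HB Require Import structures.
Set Implicit Arguments. Unset Strict Implicit. Unset Printing Implicit Defensive.
Import GRing.Theory.
Local Open Scope ring_scope.


Definition FP (k : fieldType) : Type := fpoly k.
HB.instance Definition _ (k : fieldType) := Choice.copy (FP k) (word -> k).

Section Ring.
Variable k : fieldType.
Implicit Types f g h : fpoly k.

Definition popp f : fpoly k := fun w => - f w.
Definition pone : fpoly k := fun w => if w is [::] then 1 else 0.

Lemma paddA : associative (@padd k).
Proof. by move=> f g h; apply: funext => w; rewrite /padd addrA. Qed.
Lemma paddC : commutative (@padd k).
Proof. by move=> f g; apply: funext => w; rewrite /padd addrC. Qed.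
Lemma padd0 : left_id (@pzero k) (@padd k).
Proof. by move=> f; apply: funext => w; rewrite /padd /pzero add0r. Qed.
Lemma paddN : left_inverse (@pzero k) popp (@padd k).
Proof. by move=> f; apply: funext => w; rewrite /padd /pzero /popp addNr. Qed.

Lemma pmul1 : left_id pone (@pmul k).
Proof.
move=> f; apply: funext => w; rewrite /pmul big_ord_recl /= take0 drop0 mul1r.
rewrite big1 ?addr0 // => i _.
rewrite /pone; case: w i => [|a w] [i lti] //=; by rewrite mul0r.
Qed.

Lemma pmul1r : right_id pone (@pmul k).
Proof.
move=> f; apply: funext => w; rewrite /pmul big_ord_recr /= take_size drop_size mulr1.
rewrite big1 ?add0r // => i _.
have lt : (i < size w)%N by [].
rewrite /pone; case E: (drop i w) => [|a l]; last by rewrite mulr0.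
by move: (congr1 size E); rewrite size_drop /= => /eqP; rewrite subn_eq0 leqNgt lt.
Qed.

Lemma pmulDl : left_distributive (@pmul k) (@padd k).
Proof.
move=> f g h; apply: funext => w; rewrite /pmul /padd -big_split /=.
by apply: eq_bigr => i _; rewrite mulrDl.
Qed.
Lemma pmulDr : right_distributive (@pmul k) (@padd k).
Proof.
move=> f g h; apply: funext => w; rewrite /pmul /padd -big_split /=.
by apply: eq_bigr => i _; rewrite mulrDr.
Qed.

Lemma tri_sum (F : nat -> nat -> k) n :
  \sum_(0 <= i < n.+1) \sum_(0 <= j < i.+1) F j i =
  \sum_(0 <= j < n.+1) \sum_(0 <= l < (n.+1 - j)) F j (j + l)%N.
Proof.
elim: n => [|n IH].
  by rewrite big_nat1 big_nat1 big_nat1 big_nat1.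
rewrite big_nat_recr //= IH.
rewrite [X in _ = X]big_nat_recr //= subSnn big_nat1 addn0.
rewrite [X in _ + X = _]big_nat_recr //= addrA; congr (_ + _).
rewrite -big_split; apply: eq_big_nat => j /andP[_ ltj] /=.
rewrite (subSn (ltnW ltj)) big_nat_recr //= subnKC //; exact: ltnW.
Qed.

Lemma pmulA : associative (@pmul k).
Proof.
move=> f g h; apply: funext => w; rewrite /pmul.
set n := size w.
pose F j i := f (take j w) * g (take (i - j) (drop j w)) * h (drop i w).
have E1 : \sum_(i < n.+1) (\sum_(i0 < (size (take i w)).+1)
      f (take i0 (take i w)) * g (drop i0 (take i w))) * h (drop i w) =
    \sum_(0 <= i < n.+1) \sum_(0 <= j < i.+1) F j i.
  rewrite big_mkord; apply: eq_bigr => -[i lti] _ /=.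
  rewrite mulr_suml size_takel // big_mkord; apply: eq_bigr => -[j ltj] _ /=.
  have ji : (j <= i)%N by [].
  by rewrite /F take_takel // take_drop subnK.
have E2 : \sum_(i < n.+1) f (take i w) * (\sum_(i0 < (size (drop i w)).+1)
      g (take i0 (drop i w)) * h (drop i0 (drop i w))) =
    \sum_(0 <= j < n.+1) \sum_(0 <= l < (n.+1 - j)) F j (j + l)%N.
  rewrite big_mkord; apply: eq_bigr => -[j ltj] _ /=.
  rewrite mulr_sumr size_drop -subSn // big_mkord; apply: eq_bigr => -[l ltl] _ /=.
  by rewrite /F drop_drop addKn addnC mulrA. 
by rewrite E1 E2 tri_sum.
Qed.

End Ring.

HB.instance Definition _ (k : fieldType) := GRing.isPzRing.Build (FP k)
  (@paddA k) (@paddC k) (@padd0 k) (@paddN k) (@pmulA k) (@pmul1 k) (@pmul1r k)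
  (@pmulDl k) (@pmulDr k).




Section Free.
Variable k : fieldType.
Local Notation R := (FP k).
Implicit Types f g h : R.

Lemma evalD f g w : (f + g) w = f w + g w. Proof. by []. Qed.
Lemma evalN f w : (- f) w = - f w. Proof. by []. Qed.
Lemma eval0 w : (0 : R) w = 0. Proof. by []. Qed.
Lemma evalB f g w : (f - g) w = f w - g w. Proof. by []. Qed.
Lemma eval_sum I (r : seq I) (P : pred I) (F : I -> R) w :
  (\sum_(i <- r | P i) F i) w = \sum_(i <- r | P i) F i w.
Proof.
elim: r => [|a r IH]; first by rewrite !big_nil.
by rewrite !big_cons; case: (P a); rewrite ?evalD IH.
Qed.

Definition cst (c : k) : R := fun w => if w is [::] then c else 0.
Definition delta (v : word) : R := fun w => if w == v then 1 else 0.

Lemma mulE f g w : (f * g) w = \sum_(i < (size w).+1) f (take i w) * g (drop i w).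
Proof. by []. Qed.

Lemma cst_mulE c f w : (cst c * f) w = c * f w.
Proof.
rewrite mulE big_ord_recl /= take0 drop0 big1 ?addr0 // => i _.
by case: w i => [|a w] [i lti] //=; rewrite mul0r.
Qed.

Lemma mul_cstE c f w : (f * cst c) w = f w * c.
Proof.
rewrite mulE big_ord_recr /= take_size drop_size big1 ?add0r // => i _.
have lt : (i < size w)%N by [].
rewrite /cst; case E: (drop i w) => [|a l]; last by rewrite mulr0.
by move: (congr1 size E); rewrite size_drop /= => /eqP; rewrite subn_eq0 leqNgt lt.
Qed.

Lemma cstC c f : cst c * f = f * cst c.
Proof. by apply: funext => w; rewrite cst_mulE mul_cstE mulrC. Qed.

Lemma cstM a b : cst (a * b) = cst a * cst b.
Proof. by apply: funext => w; rewrite cst_mulE; case: w => [|x w] /=; rewrite ?mulr0. Qed.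
Lemma cstD a b : cst (a + b) = cst a + cst b.
Proof. by apply: funext => w; rewrite evalD; case: w => [|x w] /=; rewrite ?addr0. Qed.
Lemma cst0 : cst 0 = 0.
Proof. by apply: funext => -[]. Qed.
Lemma cst1 : cst 1 = 1.
Proof. by []. Qed.
Lemma pscaleE c f : pscale c f = cst c * f.
Proof. by apply: funext => w; rewrite cst_mulE. Qed.
Lemma paddE f g : padd f g = f + g. Proof. by []. Qed.
Lemma pmulE f g : pmul f g = f * g. Proof. by []. Qed.
Lemma pzeroE : pzero k = 0 :> R. Proof. by []. Qed.

Lemma mul_nil f g : (f * g) [::] = f [::] * g [::].
Proof. by rewrite mulE big_ord_recl big_ord0 addr0. Qed.

Lemma delta_mul v1 v2 : delta v1 * delta v2 = delta (v1 ++ v2).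
Proof.
apply: funext => w; rewrite mulE /delta.
case: eqP => [->|ne].
  have h : (size v1 < (size (v1 ++ v2)).+1)%N by rewrite size_cat ltnS leq_addr.
  rewrite (bigD1 (Ordinal h)) //=.
  rewrite take_size_cat // drop_size_cat // !eqxx mulr1 big1 ?addr0 // => i /eqP ne.
  case: eqP => [e|]; last by rewrite mul0r.
  have := congr1 size e; rewrite size_takel; last by rewrite -ltnS.
  by move=> ei; case: ne; apply: val_inj.
rewrite big1 // => i _; case: eqP => [e1|]; last by rewrite mul0r.
case: eqP => [e2|]; last by rewrite mulr0.
by case: ne; rewrite -e1 -e2 cat_take_drop.
Qed.

Definition covers f (s : seq word) := forall w, f w != 0 -> w \in s.

Lemma fs_add f g : fin_supp f -> fin_supp g -> fin_supp (f + g).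
Proof.
move=> [s hs] [t ht]; exists (s ++ t) => w; rewrite evalD mem_cat.
by case: (f w =P 0) => [->|/eqP /hs ->] //; rewrite add0r => /ht ->; rewrite orbT.
Qed.
Lemma fs_opp f : fin_supp f -> fin_supp (- f).
Proof. by move=> [s hs]; exists s => w; rewrite evalN oppr_eq0; apply: hs. Qed.
Lemma fs_0 : fin_supp (0 : R).
Proof. by exists [::] => w; rewrite eval0 eqxx. Qed.
Lemma fs_mul f g : fin_supp f -> fin_supp g -> fin_supp (f * g).
Proof.
move=> [s hs] [t ht]; exists [seq a ++ b | a <- s, b <- t] => w; rewrite mulE => nz.
have [i nzi | all0] := pickP (fun i : 'I_(size w).+1 => f (take i w) * g (drop i w) != 0).
  rewrite -(cat_take_drop i w); apply: allpairs_f.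
    by apply: hs; apply: contraNneq nzi => ->; rewrite mul0r.
  by apply: ht; apply: contraNneq nzi => ->; rewrite mulr0.
by move: nz; rewrite big1 ?eqxx // => i _; move: (all0 i) => /negbFE /eqP.
Qed.
Lemma fs_cst c : fin_supp (cst c).
Proof. by exists [:: [::]] => -[|a w] //=; rewrite eqxx. Qed.
Lemma fs_delta v : fin_supp (delta v).
Proof. by exists [:: v] => w; rewrite /delta inE; case: (w == v) => //; rewrite eqxx. Qed.
Lemma fs_sum I (r : seq I) (F : I -> R) :
  (forall i, fin_supp (F i)) -> fin_supp (\sum_(i <- r) F i).
Proof.
move=> h; elim: r => [|a r IH]; first by rewrite big_nil; exact: fs_0.
by rewrite big_cons; apply: fs_add.
Qed.
Lemma fs_prod I (r : seq I) (F : I -> R) :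
  (forall i, fin_supp (F i)) -> fin_supp (\prod_(i <- r) F i).
Proof.
move=> h; elim: r => [|a r IH]; first by rewrite big_nil; exact: fs_cst.
by rewrite big_cons; apply: fs_mul.
Qed.

Lemma k0_fs f : in_k0X f -> fin_supp f. Proof. by case. Qed.
Lemma k0_add f g : in_k0X f -> in_k0X g -> in_k0X (f + g).
Proof. by move=> [hf f0] [hg g0]; split; [apply: fs_add | rewrite evalD f0 g0 addr0]. Qed.
Lemma k0_opp f : in_k0X f -> in_k0X (- f).
Proof. by move=> [hf f0]; split; [apply: fs_opp | rewrite evalN f0 oppr0]. Qed.
Lemma k0_sub f g : in_k0X f -> in_k0X g -> in_k0X (f - g).
Proof. by move=> hf hg; apply: k0_add => //; apply: k0_opp. Qed.
Lemma k0_0 : in_k0X (0 : R). Proof. by split; [apply: fs_0 | ]. Qed.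
Lemma k0_mull f g : in_k0X f -> fin_supp g -> in_k0X (f * g).
Proof. by move=> [hf f0] hg; split; [apply: fs_mul | rewrite mul_nil f0 mul0r]. Qed.
Lemma k0_mulr f g : fin_supp f -> in_k0X g -> in_k0X (f * g).
Proof. by move=> hf [hg g0]; split; [apply: fs_mul | rewrite mul_nil g0 mulr0]. Qed.
Lemma k0_mul f g : in_k0X f -> in_k0X g -> in_k0X (f * g).
Proof. by move=> hf hg; apply: k0_mull => //; case: hg. Qed.
Lemma k0_cst c f : in_k0X f -> in_k0X (cst c * f).
Proof. by move=> hf; apply: k0_mulr => //; apply: fs_cst. Qed.
Lemma k0_sum I (r : seq I) (F : I -> R) :
  (forall i, in_k0X (F i)) -> in_k0X (\sum_(i <- r) F i).
Proof.
move=> h; elim: r => [|a r IH]; first by rewrite big_nil; exact: k0_0.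
by rewrite big_cons; apply: k0_add.
Qed.
Lemma k0_sum_seq I (r : seq I) (F : I -> R) :
  (forall i, List.In i r -> in_k0X (F i)) -> in_k0X (\sum_(i <- r) F i).
Proof.
elim: r => [|a r IH] h; first by rewrite big_nil; exact: k0_0.
by rewrite big_cons; apply: k0_add; [apply: h; left | apply: IH => i hi; apply: h; right].
Qed.

End Free.
Arguments delta {k} v.
Arguments cst {k} c.
Arguments covers {k} f s.


Section Sub.
Variable k : fieldType.
Local Notation R := (FP k).
Implicit Types f g h : R.

Definition B (s : nat -> R) (w : word) : R := \prod_(l <- w) s l.
Definition spt f : seq word := epsilon (inhabits [::]) (covers f).
Definition sub (s : nat -> R) f : R := \sum_(w <- undup (spt f)) cst (f w) * B s w.

Lemma spt_covers f : fin_supp f -> covers f (undup (spt f)).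
Proof.
move=> hf w nz; rewrite mem_undup; exact: (epsilon_spec (inhabits [::]) (covers f) hf).
Qed.

Lemma sum_cover f s t (F : word -> R) : uniq s -> uniq t -> covers f s -> covers f t ->
  (forall w, f w = 0 -> F w = 0) -> \sum_(w <- s) F w = \sum_(w <- t) F w.
Proof.
move=> us ut cs ct hF.
have e (a b : seq word) : covers f b -> \sum_(w <- a) F w = \sum_(w <- filter (mem b) a) F w.
  move=> cb; rewrite big_filter [in RHS]big_mkcond; apply: eq_bigr => w _.
  case: ifP => // wb; case: (f w =P 0) => [/hF // | /eqP /cb h]; case: (negP (negbT wb)); exact: h.
rewrite (e s t ct) (e t s cs); apply: perm_big; apply: uniq_perm; rewrite ?filter_uniq //.
by move=> w; rewrite !mem_filter andbC.
Qed.

Lemma sub_rep s f (t : seq word) : fin_supp f -> uniq t -> covers f t ->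
  sub s f = \sum_(w <- t) cst (f w) * B s w.
Proof.
move=> hf ut ct; apply: (sum_cover (f := f)) => //; first exact: undup_uniq.
  exact: spt_covers.
by move=> w ->; rewrite cst0 mul0r.
Qed.

Lemma sub_add s f g : fin_supp f -> fin_supp g -> sub s (f + g) = sub s f + sub s g.
Proof.
move=> hf hg; set t := undup (spt f ++ spt g).
have cf : covers f t by move=> w /(spt_covers hf); rewrite !mem_undup mem_cat => ->.
have cg : covers g t by move=> w /(spt_covers hg); rewrite !mem_undup mem_cat orbC => ->.
have cfg : covers (f + g) t.
  move=> w; rewrite evalD; case: (f w =P 0) => [->|/eqP /cf //]; rewrite add0r; exact: cg.
rewrite (@sub_rep s (f + g) t (fs_add hf hg) (undup_uniq _) cfg).
rewrite (@sub_rep s f t hf (undup_uniq _) cf) (@sub_rep s g t hg (undup_uniq _) cg).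
by rewrite -big_split; apply: eq_bigr => w _; rewrite evalD cstD mulrDl.
Qed.

Lemma sub_cst s c f : fin_supp f -> sub s (cst c * f) = cst c * sub s f.
Proof.
move=> hf; have cf := spt_covers hf.
have ccf : covers (cst c * f) (undup (spt f)).
  by move=> w; rewrite cst_mulE => nz; apply: cf; apply: contraNneq nz => ->; rewrite mulr0.
rewrite (@sub_rep s (cst c * f) _ _ (undup_uniq _) ccf); last by apply: fs_mul => //; exact: fs_cst.
rewrite (@sub_rep s f _ hf (undup_uniq _) cf) // mulr_sumr; apply: eq_bigr => w _.
by rewrite cst_mulE cstM mulrA.
Qed.

Lemma sub_0 s : sub s 0 = 0.
Proof. by rewrite (@sub_rep s 0 [::]) ?big_nil //; [exact: fs_0 | move=> w; rewrite eval0 eqxx]. Qed.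

Lemma sub_delta s v : sub s (delta v) = B s v.
Proof.
have cv : covers (@delta k v) [:: v].
  by move=> w; rewrite /delta mem_seq1; case: (w == v); rewrite ?eqxx.
rewrite (@sub_rep s _ [:: v] (@fs_delta _ v) _ cv) //.
by rewrite big_seq1 /delta eqxx cst1 mul1r.
Qed.

Lemma sub_sum s I (r : seq I) (F : I -> R) : (forall i, fin_supp (F i)) ->
  sub s (\sum_(i <- r) F i) = \sum_(i <- r) sub s (F i).
Proof.
move=> h; elim: r => [|a r IH]; first by rewrite !big_nil sub_0.
by rewrite !big_cons sub_add ?IH //; apply: fs_sum.
Qed.

Lemma mono_exp f t : fin_supp f -> uniq t -> covers f t ->
  f = \sum_(w <- t) cst (f w) * delta w.
Proof.
move=> hf ut ct; apply: funext => x; rewrite eval_sum.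
under eq_bigr do rewrite cst_mulE.
case xt: (x \in t).
  rewrite (bigD1_seq x) //= /delta eqxx mulr1 big1 ?addr0 // => w wx.
  by rewrite eq_sym (negbTE wx) mulr0.
rewrite big1_seq; last by move=> w /andP[_ wt]; rewrite /delta; case: eqP => [e|]; [rewrite e wt in xt | rewrite mulr0].
by case: (f x =P 0) => // /eqP /ct; rewrite xt.
Qed.

Lemma cst_mul4 a b (x y : R) : (cst a * x) * (cst b * y) = cst (a * b) * (x * y).
Proof. by rewrite cstM -!mulrA; congr (_ * _); rewrite !mulrA cstC. Qed.

Lemma B_cat s w1 w2 : B s (w1 ++ w2) = B s w1 * B s w2.
Proof. by rewrite /B big_cat. Qed.

Lemma sub_mul s f g : fin_supp f -> fin_supp g -> sub s (f * g) = sub s f * sub s g.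
Proof.
move=> hf hg; set t1 := undup (spt f); set t2 := undup (spt g).
have c1 := spt_covers hf; have c2 := spt_covers hg.
rewrite {1}(@mono_exp f _ hf (undup_uniq _) c1) {1}(@mono_exp g _ hg (undup_uniq _) c2).
rewrite (@sub_rep s f _ hf (undup_uniq _) c1) (@sub_rep s g _ hg (undup_uniq _) c2).
rewrite big_distrl /= sub_sum; last by move=> i; apply: fs_mul; [apply: fs_mul; [apply: fs_cst|apply: fs_delta] | apply: fs_sum => j; apply: fs_mul; [apply: fs_cst|apply: fs_delta]].
rewrite big_distrl /=; apply: eq_bigr => w1 _.
rewrite !big_distrr /= sub_sum; last by move=> j; rewrite cst_mul4 delta_mul; apply: fs_mul; [apply: fs_cst|apply: fs_delta].
apply: eq_bigr => w2 _.
rewrite cst_mul4 delta_mul sub_cst ?sub_delta ?B_cat ?cst_mul4 //; exact: fs_delta.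
Qed.

Lemma B_k0 s w : (forall l, in_k0X (s l)) -> w != [::] -> in_k0X (B s w).
Proof.
move=> hs; case: w => [|l w] // _; rewrite /B big_cons; apply: k0_mull => //.
by apply: fs_prod => i; apply: k0_fs.
Qed.

Lemma sub_k0 s f : (forall l, in_k0X (s l)) -> in_k0X f -> in_k0X (sub s f).
Proof.
move=> hs hf; rewrite /sub; apply: k0_sum => w.
case: w => [|l w]; first by case: hf => _ ->; rewrite cst0 mul0r; exact: k0_0.
by apply: k0_mulr; [apply: fs_cst | apply: B_k0].
Qed.

Lemma sub_endo s : (forall l, in_k0X (s l)) -> is_endo (sub s).
Proof.
move=> hs; split; first by move=> f; apply: sub_k0.
split; first by move=> f g hf hg; apply: sub_add; apply: k0_fs.
split; first by move=> c f hf; rewrite !pscaleE sub_cst //; apply: k0_fs.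
by move=> f g hf hg; apply: sub_mul; apply: k0_fs.
Qed.

End Sub.


Section SL.
Variable k : fieldType.
Local Notation R := (FP k).
Implicit Types (c : nat -> R) (I : seq nat).

Definition SL c I : R := \sum_(t <- permutations I) B c t.
Definition upd c (i : nat) (v : R) : nat -> R := fun j => if j == i then v else c j.

Lemma SL_perm c I J : perm_eq I J -> SL c I = SL c J.
Proof. by move=> h; apply: perm_big; apply: perm_permutations. Qed.

Lemma SL_nil c : SL c [::] = 1.
Proof. by rewrite /SL /= big_seq1 /B big_nil. Qed.

Lemma SL_rec c I : uniq I -> I != [::] ->
  SL c I = \sum_(x <- I) c x * SL c (rem x I).
Proof.
move=> uI nI; rewrite /SL (perm_big _ (permutationsE _)); last by case: (I) nI.
rewrite big_allpairs_dep undup_id //; apply: eq_bigr => x _.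
by rewrite mulr_sumr; apply: eq_bigr => t _; rewrite /B big_cons.
Qed.

Lemma SL_ext c d I : (forall j, j \in I -> c j = d j) -> SL c I = SL d I.
Proof.
move=> h; rewrite /SL; apply: eq_big_seq => t; rewrite mem_permutations => pt.
by apply: eq_big_seq => j jt; apply: h; rewrite -(perm_mem pt).
Qed.

Lemma swap_sum I (G : nat -> nat -> R) : uniq I ->
  \sum_(i <- I) \sum_(x <- I | x != i) G i x = \sum_(x <- I) \sum_(i <- rem x I) G i x.
Proof.
move=> uI.
transitivity (\sum_(i <- I) \sum_(x <- I) (if x != i then G i x else 0)).
  by apply: eq_bigr => i _; rewrite big_mkcond.
rewrite exchange_big; apply: eq_bigr => x _.
by rewrite rem_filter // big_filter [in RHS]big_mkcond; apply: eq_bigr => i _; rewrite /= eq_sym.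
Qed.

Lemma EXP1 n : forall I c m, size I = n -> uniq (m :: I) ->
  SL c (m :: I) = SL c I * c m + \sum_(i <- I) SL (upd c i (c m * c i)) I.
Proof.
elim: n => [|n IH] I c m.
  move/size0nil => -> _; rewrite SL_rec // big_seq1 /= eqxx SL_nil big_nil.
  by rewrite mulr1 mul1r addr0.
move=> sI /= /andP[mI uI].
have nI : I != [::] by case: (I) sI.
rewrite SL_rec /= ?mI ?uI // big_cons eqxx.
rewrite (eq_big_seq (fun x => c x * (SL c (rem x I) * c m +
     \sum_(i <- rem x I) SL (upd c i (c m * c i)) (rem x I)))); last first.
  move=> x xI; have mx : (m == x) = false by apply/eqP => e; rewrite e xI in mI.
  rewrite mx IH //; first by rewrite size_rem // sI.
  by rewrite /= rem_uniq // andbT; apply: contra mI; apply: mem_rem.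
rewrite (SL_rec c uI nI) mulr_suml.
under [X in _ = _ + X]eq_bigr => i _ do rewrite (SL_rec _ uI nI).
under [X in _ = _ + X]eq_big_seq => i iI do rewrite (bigD1_seq i iI uI) /= /upd eqxx.
rewrite big_split /=.
under [X in _ = _ + (X + _)]eq_big_seq => i iI.
  rewrite (SL_ext (d := c)); last first.
    by move=> j; rewrite mem_rem_uniq // inE => /andP[/negbTE ->].
  over.
under [X in _ = _ + (_ + X)]eq_bigr => i _.
  under eq_bigr => x xi do rewrite (negbTE xi).
  over.
rewrite swap_sum //.
under [X in _ = _ + (X + _)]eq_bigr => i _ do rewrite -mulrA.
rewrite -[X in _ = _ + (X + _)]mulr_sumr.
under [X in _ + X = _]eq_bigr => i _ do rewrite mulrDr mulr_sumr.
rewrite big_split /= addrCA; congr (_ + (_ + _)).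
by apply: eq_bigr => i _; rewrite mulrA.
Qed.

Lemma EXP2 n : forall I c m, size I = n -> uniq (m :: I) ->
  SL c (m :: I) = c m * SL c I + \sum_(i <- I) SL (upd c i (c i * c m)) I.
Proof.
elim: n => [|n IH] I c m.
  move/size0nil => -> _; rewrite SL_rec // big_seq1 /= eqxx SL_nil big_nil.
  by rewrite addr0.
move=> sI /= /andP[mI uI].
have nI : I != [::] by case: (I) sI.
rewrite SL_rec /= ?mI ?uI // big_cons eqxx.
rewrite (eq_big_seq (fun x => c x * (c m * SL c (rem x I) +
     \sum_(i <- rem x I) SL (upd c i (c i * c m)) (rem x I)))); last first.
  move=> x xI; have mx : (m == x) = false by apply/eqP => e; rewrite e xI in mI.
  rewrite mx IH //; first by rewrite size_rem // sI.
  by rewrite /= rem_uniq // andbT; apply: contra mI; apply: mem_rem.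
under [X in _ = _ + X]eq_bigr => i _ do rewrite (SL_rec _ uI nI).
under [X in _ = _ + X]eq_big_seq => i iI do rewrite (bigD1_seq i iI uI) /= /upd eqxx.
rewrite big_split /=.
under [X in _ = _ + (X + _)]eq_big_seq => i iI.
  rewrite (SL_ext (d := c)); last first.
    by move=> j; rewrite mem_rem_uniq // inE => /andP[/negbTE ->].
  over.
under [X in _ = _ + (_ + X)]eq_bigr => i _.
  under eq_bigr => x xi do rewrite (negbTE xi).
  over.
rewrite swap_sum //.
under [X in _ + X = _]eq_bigr => i _ do rewrite mulrDr.
rewrite big_split /=; congr (_ + (_ + _)).
  by apply: eq_bigr => i _; rewrite mulrA.
by apply: eq_bigr => i _; rewrite mulr_sumr.
Qed.

Lemma perm_swap2 (a b : nat) I : perm_eq (a :: b :: I) (b :: a :: I).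
Proof. by apply/seq.permP => P /=; rewrite addnCA. Qed.

Lemma KL1 c I m1 m2 : uniq (m1 :: m2 :: I) ->
  SL c (m1 :: I) * c m2 + \sum_(i <- m1 :: I) SL (upd c i (c m2 * c i)) (m1 :: I) =
  SL c (m2 :: I) * c m1 + \sum_(i <- m2 :: I) SL (upd c i (c m1 * c i)) (m2 :: I).
Proof.
move=> u; rewrite -(@EXP1 (size I).+1 (m1 :: I) c m2) //; last first.
  by rewrite (perm_uniq (perm_swap2 m2 m1 I)).
rewrite -(@EXP1 (size I).+1 (m2 :: I) c m1) //.
exact: SL_perm (perm_swap2 _ _ _).
Qed.

Lemma KL2 c I m1 m2 : uniq (m1 :: m2 :: I) ->
  c m2 * SL c (m1 :: I) + \sum_(i <- m1 :: I) SL (upd c i (c i * c m2)) (m1 :: I) =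
  c m1 * SL c (m2 :: I) + \sum_(i <- m2 :: I) SL (upd c i (c i * c m1)) (m2 :: I).
Proof.
move=> u; rewrite -(@EXP2 (size I).+1 (m1 :: I) c m2) //; last first.
  by rewrite (perm_uniq (perm_swap2 m2 m1 I)).
rewrite -(@EXP2 (size I).+1 (m2 :: I) c m1) //.
exact: SL_perm (perm_swap2 _ _ _).
Qed.

End SL.


Section SdImage.
Variable k : fieldType.
Local Notation R := (FP k).

Definition ws d (s : 'S_d) : word := [seq nat_of_ord (s i) | i <- enum 'I_d].

Lemma nth_ws d (s : 'S_d) (i : 'I_d) : nth 0%N (ws s) i = s i.
Proof. by rewrite /ws (nth_map i) ?nth_ord_enum // size_enum_ord. Qed.

Lemma Sd_sum d : Sd k d = \sum_(s : 'S_d) delta (ws s).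
Proof. by apply: funext => w; rewrite eval_sum. Qed.

Lemma perm_ws d : perm_eq (map (@ws d) (enum 'S_d)) (permutations (iota 0 d)).
Proof.
apply: uniq_perm; [ | exact: permutations_uniq | ].
  rewrite map_inj_uniq ?enum_uniq // => s1 s2 e; apply/permP => i; apply: val_inj.
  by move: (congr1 (fun t => nth 0%N t i) e); rewrite !nth_ws.
move=> t; rewrite mem_permutations; apply/mapP/idP => [[s _ ->] | pt].
  rewrite /ws -val_enum_ord (map_comp val s); apply: perm_map.
  apply: uniq_perm; first (rewrite map_inj_uniq ?enum_uniq //; exact: perm_inj).
    exact: enum_uniq.
  move=> x; rewrite mem_enum; apply/mapP; exists ((s^-1)%g x); rewrite ?mem_enum ?permKV //.
have st : size t = d by rewrite (perm_size pt) size_iota.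
have ut : uniq t by rewrite (perm_uniq pt) iota_uniq.
have lt i : (i < d)%N -> (nth 0%N t i < d)%N.
  move=> lid; have : nth 0%N t i \in iota 0 d by rewrite -(perm_mem pt) mem_nth // st.
  by rewrite mem_iota.
pose f (i : 'I_d) : 'I_d := Ordinal (lt i (ltn_ord i)).
have f_inj : injective f.
  move=> i j /(congr1 val) /= e; apply: val_inj => /=.
  by move/eqP: e; rewrite nth_uniq ?st // => /eqP.
exists (perm f_inj); first by rewrite mem_enum.
apply: (@eq_from_nth _ 0%N); first by rewrite /ws size_map size_enum_ord st.
move=> i; rewrite st => lid.
have -> : i = nat_of_ord (Ordinal lid) by [].
by rewrite nth_ws permE.
Qed.

Lemma sub_Sd (r : nat -> R) d : sub r (Sd k d) = SL r (iota 0 d).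
Proof.
rewrite Sd_sum sub_sum; last by move=> i; apply: fs_delta.
under eq_bigr do rewrite sub_delta.
rewrite /SL -(perm_big _ (perm_ws d)) big_map big_enum //.
Qed.

Lemma relabel n : forall (I : seq nat) (t t' : nat -> R) m m', size I = n ->
  uniq (m :: I) -> uniq (m' :: I) -> (forall j, j \in I -> t j = t' j) -> t m = t' m' ->
  SL t (m :: I) = SL t' (m' :: I).
Proof.
elim: n => [|n IH] I t t' m m' sI u u' e em.
  by move/size0nil: sI => ->; rewrite !SL_rec // !big_seq1 /= !eqxx !SL_nil em.
rewrite !SL_rec // !big_cons /= !eqxx (SL_ext (d := t')); last by move=> j /e.
rewrite em; congr (_ + _).
move: u u' => /= /andP[mI uI] /andP[mI' uI'].
apply: eq_big_seq => x xI.
have -> : (m == x) = false by apply/eqP => ex; rewrite ex xI in mI.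
have -> : (m' == x) = false by apply/eqP => ex; rewrite ex xI in mI'.
rewrite e // (IH (rem x I) t t' m m') //; first by rewrite size_rem // sI.
- by rewrite /= rem_uniq // andbT; apply: contra mI; apply: mem_rem.
- by rewrite /= rem_uniq // andbT; apply: contra mI'; apply: mem_rem.
by move=> j /mem_rem /e.
Qed.

Lemma perm_iotaS n : perm_eq (n :: iota 0 n) (iota 0 n.+1).
Proof. by rewrite -addn1 iotaD add0n perm_sym perm_catC. Qed.

Lemma SL_in_Sd1 n (c : nat -> R) m : (n <= m)%N ->
  (forall j, j \in m :: iota 0 n -> in_k0X (c j)) ->
  Sd1 n.+1 (SL c (m :: iota 0 n)).
Proof.
move=> nm hc.
pose r j : R := if (j < n)%N then c j else if j == n then c m else 0.
have um : uniq (m :: iota 0 n) by rewrite /= iota_uniq mem_iota ltnNge nm andbF.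
have un : uniq (n :: iota 0 n) by rewrite /= iota_uniq mem_iota ltnn andbF.
have -> : SL c (m :: iota 0 n) = SL r (iota 0 n.+1).
  rewrite -(SL_perm r (perm_iotaS n)) (@relabel n (iota 0 n) c r m n) ?size_iota //.
    by move=> j; rewrite mem_iota /r => /andP[_ ->].
  by rewrite /r ltnn eqxx.
have hr : forall l, in_k0X (r l).
  move=> l; rewrite /r; case: ifP => ln.
    by apply: hc; rewrite inE mem_iota ln orbT.
  by case: ifP => _; [apply: hc; rewrite inE eqxx | exact: k0_0].
rewrite -sub_Sd => V [_ hV] hS; apply: hV; [exact: sub_endo | exact: hS].
Qed.

End SdImage.


Section TS.
Variable k : fieldType.
Local Notation R := (FP k).
Implicit Types (A V : R -> Prop) (phi : R -> R).

Lemma k0_Tspace : is_Tspace (@in_k0X k).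
Proof.
split; last by move=> phi f [h _] hf; apply: h.
split=> //; split; first exact: k0_0.
split; first by move=> f g; apply: k0_add.
by move=> c f hf; rewrite pscaleE; apply: k0_cst.
Qed.

Lemma Tgen_Tspace A : (forall a, A a -> in_k0X a) -> is_Tspace (Tgen A).
Proof.
move=> hA; split; last by move=> phi f he hf V hV hAV; case: (hV) => _ hV'; apply: hV' => //; exact: hf.
split; first by move=> f hf; apply: hf => //; exact: k0_Tspace.
split; first by move=> V [[_ [h _]] _].
split; first by move=> f g hf hg V hV hAV; case: (hV) => [[_ [_ [h _]]] _]; apply: h; [apply: hf|apply: hg].
by move=> c f hf V hV hAV; case: (hV) => [[_ [_ [_ h]]] _]; apply: h; apply: hf.
Qed.

Lemma Tgen_incl A a : A a -> Tgen A a.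
Proof. by move=> ha V _ h; apply: h. Qed.

Lemma TS_k0 V f : is_Tspace V -> V f -> in_k0X f.
Proof. by move=> [[h _] _]; apply: h. Qed.
Lemma TS_0 V : is_Tspace V -> V 0.
Proof. by move=> [[_ [h _]] _]. Qed.
Lemma TS_add V f g : is_Tspace V -> V f -> V g -> V (f + g).
Proof. by move=> [[_ [_ [h _]]] _]; apply: h. Qed.
Lemma TS_cst V c f : is_Tspace V -> V f -> V (cst c * f).
Proof. by move=> [[_ [_ [_ h]]] _] hf; rewrite -pscaleE; apply: h. Qed.
Lemma TS_opp V f : is_Tspace V -> V f -> V (- f).
Proof.
move=> hV hf; have -> : - f = cst (-1) * f.
  by apply: funext => w; rewrite cst_mulE evalN mulN1r.
exact: TS_cst.
Qed.
Lemma TS_sub V f g : is_Tspace V -> V f -> V g -> V (f - g).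
Proof. by move=> hV hf hg; apply: TS_add => //; apply: TS_opp. Qed.
Lemma TS_sum V I (r : seq I) (F : I -> R) : is_Tspace V ->
  (forall i, List.In i r -> V (F i)) -> V (\sum_(i <- r) F i).
Proof.
move=> hV; elim: r => [|a r IH] h; first by rewrite big_nil; exact: TS_0.
by rewrite big_cons; apply: TS_add => //; [apply: h; left | apply: IH => i hi; apply: h; right].
Qed.
Lemma TS_sum_seq V (r : seq nat) (F : nat -> R) : is_Tspace V ->
  (forall i, i \in r -> V (F i)) -> V (\sum_(i <- r) F i).
Proof.
move=> hV h; apply: TS_sum => // i hi; apply: h.
by elim: r hi => //= a r IH [->|/IH]; rewrite inE ?eqxx // => ->; rewrite orbT.
Qed.

Lemma sum3_Tspace A1 A2 A3 : is_Tspace A1 -> is_Tspace A2 -> is_Tspace A3 ->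
  is_Tspace (sum3 A1 A2 A3).
Proof.
move=> h1 h2 h3; split; last first.
  move=> phi f he [a [b [c [ha hb hc ->]]]].
  have ka := TS_k0 h1 ha; have kb := TS_k0 h2 hb; have kc := TS_k0 h3 hc.
  case: (he) => _ [hadd _].
  exists (phi a), (phi b), (phi c); split.
  - by case: h1 => _ h; apply: h.
  - by case: h2 => _ h; apply: h.
  - by case: h3 => _ h; apply: h.
  by rewrite hadd ?hadd //; apply: k0_add.
split.
  move=> f [a [b [c [ha hb hc ->]]]].
  by apply: k0_add; [apply: k0_add; [exact: TS_k0 h1 ha | exact: TS_k0 h2 hb] | exact: TS_k0 h3 hc].
split; first by exists (0 : R), (0 : R), (0 : R); split; rewrite ?paddE ?addr0 //; apply: TS_0.
split.
  move=> f g [a [b [c [ha hb hc ->]]]] [a' [b' [c' [ha' hb' hc' ->]]]].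
  exists ((a : R) + a'), ((b : R) + b'), ((c : R) + c'); split; try by apply: TS_add.
  by rewrite !paddE addrACA [(a : R) + b + _]addrACA.
move=> s f [a [b [c [ha hb hc ->]]]]; exists (cst s * (a : R)), (cst s * (b : R)), (cst s * (c : R)).
split; try by apply: TS_cst.
by rewrite pscaleE !paddE !mulrDr.
Qed.

Lemma endo_0 phi : is_endo phi -> phi 0 = 0.
Proof.
move=> [_ [h _]]; have := h (0 : R) (0 : R) (k0_0 k) (k0_0 k); rewrite paddE addr0 => e.
have e' : (phi 0 : R) + phi 0 = phi 0 + 0 by rewrite addr0 {3}e.
exact: (@addrI R (phi 0) _ _ e').
Qed.

Lemma endo_sum phi I (r : seq I) (P : pred I) (F : I -> R) : is_endo phi ->
  (forall i, P i -> in_k0X (F i)) ->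
  phi (\sum_(i <- r | P i) F i) = \sum_(i <- r | P i) phi (F i).
Proof.
move=> he hF; elim: r => [|a r IH]; first by rewrite !big_nil endo_0.
rewrite !big_cons; case Pa: (P a) => //.
case: (he) => _ [h _]; rewrite -paddE h ?IH //; first by apply: hF.
elim: r {IH} => [|b r IH]; first by rewrite big_nil; exact: k0_0.
by rewrite big_cons; case Pb: (P b) => //; apply: k0_add => //; apply: hF.
Qed.

Lemma endo_cst phi c f : is_endo phi -> in_k0X f -> phi (cst c * f) = cst c * phi f.
Proof. by move=> [_ [_ [h _]]] hf; rewrite -!pscaleE h. Qed.

Lemma endo_B phi (s : nat -> R) t : is_endo phi -> (forall l, in_k0X (s l)) ->
  t != [::] -> phi (B s t) = B (fun l => phi (s l)) t.
Proof.
move=> he hs; elim: t => [|a t IH] // _.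
case: t IH => [|b t] IH; first by rewrite /B !big_seq1.
rewrite /B big_cons [in RHS]big_cons -/(B s (b :: t)) -/(B _ (b :: t)).
case: (he) => _ [_ [_ h]]; rewrite -pmulE h ?IH //; exact: B_k0.
Qed.

Lemma k0_sum_cond I (r : seq I) (P : pred I) (F : I -> R) :
  (forall i, P i -> in_k0X (F i)) -> in_k0X (\sum_(i <- r | P i) F i).
Proof.
move=> h; elim: r => [|a r IH]; first by rewrite big_nil; exact: k0_0.
by rewrite big_cons; case Pa: (P a) => //; apply: k0_add => //; apply: h.
Qed.

Lemma SL_k0 (s : nat -> R) d : (forall l, in_k0X (s l)) -> (0 < d)%N ->
  in_k0X (SL s (iota 0 d)).
Proof.
move=> hs d0; rewrite /SL big_seq; apply: k0_sum_cond => t.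
rewrite mem_permutations => /perm_size; rewrite size_iota => st; apply: B_k0 => //.
move: st.
by case: (t) => //= e; rewrite -e in d0.
Qed.

Lemma endo_SL phi (s : nat -> R) d : is_endo phi -> (forall l, in_k0X (s l)) ->
  (0 < d)%N -> phi (SL s (iota 0 d)) = SL (fun l => phi (s l)) (iota 0 d).
Proof.
move=> he hs d0; rewrite /SL big_seq [in RHS]big_seq endo_sum //.
  apply: eq_bigr => t; rewrite mem_permutations => pt; apply: endo_B => //.
  by move: (perm_size pt); rewrite size_iota; case: (t) => //= e; rewrite -e in d0.
move=> t; rewrite mem_permutations => pt; apply: B_k0 => //.
by move: (perm_size pt); rewrite size_iota; case: (t) => //= e; rewrite -e in d0.
Qed.

Definition Wsp d (f : R) : Prop := exists r : seq (k * (nat -> R)),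
  (forall x, x \in r -> forall l, in_k0X (x.2 l)) /\
  f = \sum_(x <- r) cst x.1 * SL x.2 (iota 0 d).

Definition dl (l : nat) : R := delta [:: l].

Lemma B_dl w : B dl w = delta w.
Proof.
elim: w => [|l w IH].
  by rewrite /B big_nil; apply: funext => -[|a x].
by rewrite /B big_cons -/(B dl w) IH /dl delta_mul.
Qed.

Lemma sub_dl f : fin_supp f -> sub dl f = f.
Proof.
move=> hf; rewrite /sub; under eq_bigr do rewrite B_dl.
by rewrite -(mono_exp hf (undup_uniq _) (spt_covers hf)).
Qed.

Lemma fs_Sd d : fin_supp (Sd k d).
Proof. by rewrite Sd_sum; apply: fs_sum => s; apply: fs_delta. Qed.

Lemma Sd_SL d : Sd k d = SL dl (iota 0 d).
Proof. by rewrite -sub_Sd sub_dl //; apply: fs_Sd. Qed.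

Lemma dl_k0 l : in_k0X (dl l).
Proof. by split; [apply: fs_delta | rewrite /dl /delta]. Qed.

Lemma Sd_k0 d : (0 < d)%N -> in_k0X (Sd k d).
Proof. by move=> d0; rewrite Sd_SL; apply: SL_k0 => //; apply: dl_k0. Qed.

Lemma Wsp_Tspace d : (0 < d)%N -> is_Tspace (Wsp d).
Proof.
move=> d0; split; last first.
  move=> phi f he [r [hr ->]].
  exists [seq (x.1, fun l => phi (x.2 l)) | x <- r]; split.
    move=> x /mapP [y hy ->] l /=; case: he => h _; exact: h (hr y hy l).
  rewrite big_map big_seq [in RHS]big_seq endo_sum //; last first.
    by move=> x /hr hx; apply: k0_cst; exact: (SL_k0 hx d0).
  apply: eq_bigr => x /hr hx /=; rewrite endo_cst //; last exact: (SL_k0 hx d0).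
  by rewrite endo_SL.
split.
  move=> f [r [hr ->]]; rewrite big_seq; apply: k0_sum_cond => x /hr hx; apply: k0_cst.
  exact: (SL_k0 hx d0).
split; first by exists [::]; split => //; rewrite big_nil.
split.
  move=> f g [r1 [h1 ->]] [r2 [h2 ->]]; exists (r1 ++ r2); split; last by rewrite big_cat.
  by move=> x; rewrite mem_cat => /orP[/h1 h|/h2 h] l; apply: h.
move=> c f [r [hr ->]]; exists [seq (c * x.1, x.2) | x <- r]; split.
  by move=> x /mapP [y hy ->]; exact: (hr y hy).
by rewrite big_map pscaleE mulr_sumr; apply: eq_bigr => x _; rewrite cstM mulrA.
Qed.

Lemma Wsp_Sd d : Wsp d (Sd k d).
Proof.
exists [:: (1, dl)]; split; first by move=> x; rewrite inE => /eqP -> l; apply: dl_k0.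
by rewrite big_seq1 cst1 mul1r Sd_SL.
Qed.

Lemma Sd1_Wsp d f : (0 < d)%N -> Sd1 d f -> Wsp d f.
Proof. by move=> d0 hf; apply: hf; [apply: Wsp_Tspace | move=> a ->; apply: Wsp_Sd]. Qed.

Lemma Sd1_Tspace d : (0 < d)%N -> is_Tspace (Sd1 (k:=k) d).
Proof. by move=> d0; apply: Tgen_Tspace => a ->; apply: Sd_k0. Qed.

End TS.


Lemma In_mem (T : eqType) (x : T) r : List.In x r -> x \in r.
Proof. by elim: r => //= a r IH [->|/IH]; rewrite inE ?eqxx // => ->; rewrite orbT. Qed.

Section Main.
Variable k : fieldType.
Local Notation R := (FP k).

Lemma upd_k0 (c : nat -> R) i (w : R) : (forall l, in_k0X (c l)) -> in_k0X w ->
  forall l, in_k0X (upd c i w l).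
Proof. by move=> hc hw l; rewrite /upd; case: ifP. Qed.

Lemma sumSL_Sd1 n (c : nat -> R) m (F : nat -> R) (J : seq nat) : (n <= m)%N ->
  (forall i l, in_k0X (upd c i (F i) l)) ->
  Sd1 n.+1 (\sum_(i <- J) SL (upd c i (F i)) (m :: iota 0 n)).
Proof.
move=> nm h; apply: TS_sum => // [|i _]; first exact: Sd1_Tspace.
by apply: SL_in_Sd1 => // j _; apply: h.
Qed.

Lemma key_i n (s : nat -> R) (u v : R) : (forall l, in_k0X (s l)) -> in_k0X u -> in_k0X v ->
  sum3 (Sd1 n.+1) (Tgen (setMr (Sd1 n.+1) u)) (Tgen (setMr (Sd1 n.+1) v))
    (SL s (iota 0 n.+1) * u * v).
Proof.
move=> hs hu hv.
set I := iota 0 n.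
pose c := upd (upd s n.+1 u) n.+2 (s n * v).
have ne02 : (n == n.+2) = false by apply: ltn_eqF; apply: leqW.
have ne12 : (n.+1 == n.+2) = false by apply: ltn_eqF.
have ne01 : (n == n.+1) = false by apply: ltn_eqF.
have hc : forall l, in_k0X (c l).
  by apply: upd_k0; [apply: upd_k0 | apply: k0_mul].
have cn : c n = s n by rewrite /c /upd ne02 ne01.
have c1 : c n.+1 = u by rewrite /c /upd ne12 eqxx.
have c2 : c n.+2 = s n * v by rewrite /c /upd eqxx.
have cI : forall j, j \in n :: I -> c j = s j.
  move=> j; rewrite inE mem_iota => /orP[/eqP ->|/andP[_ lj]] //.
  by rewrite /c /upd !ltn_eqF // ?(ltn_trans lj) // ltnW // ltnW.
have hS : SL s (iota 0 n.+1) = SL c (n :: I).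
  by rewrite -(SL_perm _ (perm_iotaS n)); apply/esym/SL_ext.
have nI m : (n <= m)%N -> (m \in I) = false by move=> nm; rewrite mem_iota ltnNge nm andbF.
have u1 : uniq (n :: n.+1 :: I) by rewrite /= !inE ne01 !nI ?iota_uniq // leqW.
have u2 : uniq (n.+1 :: n.+2 :: I) by rewrite /= !inE ne12 !nI ?iota_uniq // !leqW.
have K1 := KL1 c u1; have K2 := KL1 c u2.
rewrite cn c1 c2 in K1 K2.
move: K1 K2.
set A := SL c (n :: I); set B1 := SL c (n.+1 :: I); set C := SL c (n.+2 :: I).
set Xa := \sum_(i <- n :: I) _; set Xb := \sum_(i <- n.+1 :: I) _.
set Ya := \sum_(i <- n.+1 :: I) _; set Yb := \sum_(i <- n.+2 :: I) _.
move=> K1 K2.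
have e1 : A * u = B1 * s n + (Xb - Xa) by rewrite -(addrK Xa (A * u)) K1 -addrA.
have e2 : B1 * (s n * v) = C * u + (Yb - Ya) by rewrite -(addrK Ya (B1 * _)) K2 -addrA.
exists (Yb - Ya), (C * u), ((Xb - Xa) * v); split.
- apply: (TS_sub (@Sd1_Tspace k n.+1 (ltn0Sn n))).
    apply: (@sumSL_Sd1 n c n.+2 (fun i => u * c i)); first by rewrite !leqW.
    by move=> i; apply: upd_k0 => //; apply: k0_mul.
  apply: (@sumSL_Sd1 n c n.+1 (fun i => s n * v * c i)); first by rewrite !leqW.
  by move=> i; apply: upd_k0 => //; apply: k0_mul => //; apply: k0_mul.
- apply: Tgen_incl; exists C => //; apply: SL_in_Sd1; first by rewrite !leqW.
  by move=> j _; apply: hc.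
- apply: Tgen_incl; exists (Xb - Xa) => //; apply: (TS_sub (@Sd1_Tspace k n.+1 (ltn0Sn n))).
    apply: (@sumSL_Sd1 n c n.+1 (fun i => s n * c i)); first by rewrite !leqW.
    by move=> i; apply: upd_k0 => //; apply: k0_mul.
  apply: (@sumSL_Sd1 n c n (fun i => u * c i)) => //.
  by move=> i; apply: upd_k0 => //; apply: k0_mul.
rewrite hS e1 mulrDl -mulrA e2 !paddE.
by rewrite [C * u + _]addrC.
Qed.

Lemma key_ii n (s : nat -> R) (u v : R) : (forall l, in_k0X (s l)) -> in_k0X u -> in_k0X v ->
  sum3 (Sd1 n.+1) (Tgen (setMl u (Sd1 n.+1))) (Tgen (setMl v (Sd1 n.+1)))
    (u * v * SL s (iota 0 n.+1)).
Proof.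
move=> hs hu hv.
set I := iota 0 n.
pose c := upd (upd s n.+1 v) n.+2 (u * s n).
have ne02 : (n == n.+2) = false by apply: ltn_eqF; apply: leqW.
have ne12 : (n.+1 == n.+2) = false by apply: ltn_eqF.
have ne01 : (n == n.+1) = false by apply: ltn_eqF.
have hc : forall l, in_k0X (c l).
  by apply: upd_k0; [apply: upd_k0 | apply: k0_mul].
have cn : c n = s n by rewrite /c /upd ne02 ne01.
have c1 : c n.+1 = v by rewrite /c /upd ne12 eqxx.
have c2 : c n.+2 = u * s n by rewrite /c /upd eqxx.
have cI : forall j, j \in n :: I -> c j = s j.
  move=> j; rewrite inE mem_iota => /orP[/eqP ->|/andP[_ lj]] //.
  by rewrite /c /upd !ltn_eqF // ?(ltn_trans lj) // ltnW // ltnW.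
have hS : SL s (iota 0 n.+1) = SL c (n :: I).
  by rewrite -(SL_perm _ (perm_iotaS n)); apply/esym/SL_ext.
have nI m : (n <= m)%N -> (m \in I) = false by move=> nm; rewrite mem_iota ltnNge nm andbF.
have u1 : uniq (n :: n.+1 :: I) by rewrite /= !inE ne01 !nI ?iota_uniq // leqW.
have u2 : uniq (n.+1 :: n.+2 :: I) by rewrite /= !inE ne12 !nI ?iota_uniq // !leqW.
have K1 := KL2 c u1; have K2 := KL2 c u2.
rewrite cn c1 c2 in K1 K2.
move: K1 K2.
set A := SL c (n :: I); set B1 := SL c (n.+1 :: I); set C := SL c (n.+2 :: I).
set Xa := \sum_(i <- n :: I) _; set Xb := \sum_(i <- n.+1 :: I) _.
set Ya := \sum_(i <- n.+1 :: I) _; set Yb := \sum_(i <- n.+2 :: I) _.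
move=> K1 K2.
have e1 : v * A = s n * B1 + (Xb - Xa) by rewrite -(addrK Xa (v * A)) K1 -addrA.
have e2 : u * s n * B1 = v * C + (Yb - Ya) by rewrite -(addrK Ya (_ * B1)) K2 -addrA.
exists (Yb - Ya), (u * (Xb - Xa)), (v * C); split.
- apply: (TS_sub (@Sd1_Tspace k n.+1 (ltn0Sn n))).
    apply: (@sumSL_Sd1 n c n.+2 (fun i => c i * v)); first by rewrite !leqW.
    by move=> i; apply: upd_k0 => //; apply: k0_mul.
  apply: (@sumSL_Sd1 n c n.+1 (fun i => c i * (u * s n))); first by rewrite !leqW.
  by move=> i; apply: upd_k0 => //; apply: k0_mul => //; apply: k0_mul.
- apply: Tgen_incl; exists (Xb - Xa) => //; apply: (TS_sub (@Sd1_Tspace k n.+1 (ltn0Sn n))).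
    apply: (@sumSL_Sd1 n c n.+1 (fun i => c i * s n)); first by rewrite !leqW.
    by move=> i; apply: upd_k0 => //; apply: k0_mul.
  apply: (@sumSL_Sd1 n c n (fun i => c i * v)) => //.
  by move=> i; apply: upd_k0 => //; apply: k0_mul.
- apply: Tgen_incl; exists C => //; apply: SL_in_Sd1; first by rewrite !leqW.
  by move=> j _; apply: hc.
rewrite hS -mulrA e1 mulrDr mulrA e2 !paddE.
by rewrite [_ + v * C]addrC !addrA.
Qed.

End Main.

Local Close Scope ring_scope.
Theorem proposition3p1 (k : fieldType) (p : nat) (hp : prime p)
  (hchar : (p \in [pchar k])%R) (d : nat) (hd : 0 < d) (u v : fpoly k) :
  in_k0X u -> in_k0X v ->
  (forall f, Tgen (setMr (setMr (Sd1 d) u) v) f ->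
     sum3 (Sd1 d) (Tgen (setMr (Sd1 d) u)) (Tgen (setMr (Sd1 d) v)) f) /\
  (forall f, Tgen (setMl u (setMl v (Sd1 d))) f ->
     sum3 (Sd1 d) (Tgen (setMl u (Sd1 d))) (Tgen (setMl v (Sd1 d))) f).
Proof.
move=> hu hv; case: d hd => // n _.
have hS := @Sd1_Tspace k n.+1 (ltn0Sn n).
split.
  have hV : is_Tspace (sum3 (Sd1 n.+1) (Tgen (setMr (Sd1 n.+1) u)) (Tgen (setMr (Sd1 n.+1) v))).
    apply: sum3_Tspace => //; apply: Tgen_Tspace => a [s hs ->];
      by apply: k0_mul => //; exact: TS_k0 hS hs.
  move=> f hf; apply: hf => // g [a [s hs ->] ->].
  have [r [hr ->]] := Sd1_Wsp (ltn0Sn n) hs.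
  rewrite !pmulE !mulr_suml; apply: TS_sum => // x /In_mem /hr hx.
  rewrite -!mulrA; apply: TS_cst => //; rewrite !mulrA; exact: key_i.
have hV : is_Tspace (sum3 (Sd1 n.+1) (Tgen (setMl u (Sd1 n.+1))) (Tgen (setMl v (Sd1 n.+1)))).
  apply: sum3_Tspace => //; apply: Tgen_Tspace => a [s hs ->];
    by apply: k0_mul => //; exact: TS_k0 hS hs.
move=> f hf; apply: hf => // g [a [s hs ->] ->].
have [r [hr ->]] := Sd1_Wsp (ltn0Sn n) hs.
rewrite !pmulE !mulr_sumr; apply: TS_sum => // x /In_mem /hr hx.
rewrite cstC !mulrA -cstC; apply: TS_cst => //; exact: key_ii.
Qed.
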